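(* Let $\Gamma$ be a tetravalent (simple) graph admitting a subgroup $G \leq \mathrm{Aut}(\Gamma)$ acting regularly on the set of arcs of $\Gamma$. Then $\Gamma$ has exactly three $G$-orbits of $G$-consistent cycles, all of which are $G$-symmetric, if and only if the vertex stabilizers in $G$ are isomorphic to the Klein $4$-group $\mathbb{Z}_2\times\mathbb{Z}_2$.
   Context: An arc of a graph is an ordered pair of adjacent vertices. For an arc-transitive group $G$ of automorphisms of $\Gamma$, a directed cycle $\vec C=(v_0,v_1,\ldots,v_{r-1})$ (a connected $2$-valent subgraph with one of its two orientations) is $G$-consistent if some $g\in G$ maps each $v_i$ to $v_{i+1}$ (indices mod $r$); such $g$ is a shunt. An undirected cycle is $G$-consistent if its two orientations are $G$-consistent. A $G$-consistent cycle is $G$-symmetric if some element of $G$ maps $\vec C$ to its reverse $(v_0,v_{r-1},\ldots,v_1)$, and $G$-chiral otherwise. $G$ acts naturally on the set of $G$-consistent cycles. *)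

(* Defs.v *)
From HB Require Import structures.
From mathcomp Require Import all_boot all_fingroup all_algebra.
From mathcomp Require Import gproduct.
Set Implicit Arguments. Unset Strict Implicit. Unset Printing Implicit Defensive.

(* Finite simple graphs: a symmetric irreflexive relation e on a finType T.
   A directed cycle (v_0,...,v_{r-1}) is represented by a sequence s of
   pairwise distinct vertices, r >= 3, with e v_i v_{i+1} (indices mod r);
   as an object (i.e. up to rotation of the starting point) it is
   identified with its set of arcs {(v_i, v_{i+1})}. *)

Section Cycles.
Variables (T : finType) (e : rel T).

Definition cycle_seq (s : seq T) : bool := [&& 2 < size s, uniq s & path.cycle e s].

Definition arcs_of (s : seq T) : {set T * T} := [set (x, next s x) | x in s].

Definition dcycle (D : {set T * T}) : Prop :=
  exists s, cycle_seq s /\ D = arcs_of s.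

Definition rev_arcs (D : {set T * T}) : {set T * T} := [set (a.2, a.1) | a in D].

Definition undirect (D : {set T * T}) : {set {set T}} := [set [set a.1; a.2] | a in D].

Definition ucycle (U : {set {set T}}) : Prop :=
  exists D, dcycle D /\ U = undirect D.

Definition act_arcs (g : {perm T}) (D : {set T * T}) : {set T * T} :=
  [set (g a.1, g a.2) | a in D].
Definition act_edges (g : {perm T}) (U : {set {set T}}) : {set {set T}} :=
  [set g @: x | x : {set T} in U].

Variable G : {group {perm T}}.

Definition dconsistent (D : {set T * T}) : Prop :=
  dcycle D /\ exists2 g, g \in G & forall a, a \in D -> g a.1 = a.2.

Definition uconsistent (U : {set {set T}}) : Prop :=
  ucycle U /\ forall D, dcycle D -> undirect D = U -> dconsistent D.

Definition usymmetric (U : {set {set T}}) : Prop :=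
  forall D, dcycle D -> undirect D = U ->
    exists2 g, g \in G & act_arcs g D = rev_arcs D.

Definition same_orbit (U V : {set {set T}}) : Prop :=
  exists2 g, g \in G & act_edges g U = V.

End Cycles.

(* Main.v *)
Require Import Defs.
From HB Require Import structures.
From mathcomp Require Import all_boot all_fingroup all_algebra.
From mathcomp Require Import gproduct.
From mathcomp Require Import all_solvable.
Set Implicit Arguments. Unset Strict Implicit. Unset Printing Implicit Defensive.


Section Gen.
Variables (T : finType) (e : rel T).
Hypothesis e_irr : irreflexive e.

Lemma arcs_ofE (s : seq T) (a : T * T) : (a \in arcs_of s) = (a.1 \in s) && (a.2 == next s a.1).
Proof.
apply/imsetP/andP => [[x xs ->] | [h1 /eqP h2]] /=; first by rewrite xs eqxx.
by exists a.1 => //; rewrite -h2; case: a {h1 h2}.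
Qed.

Definition Cyc (g : {perm T}) x : {set T * T} :=
  [set a | (a.1 \in porbit g x) && (a.2 == g a.1)].

Lemma inCyc (g : {perm T}) x a : (a \in Cyc g x) = (a.1 \in porbit g x) && (a.2 == g a.1).
Proof. by rewrite inE. Qed.

Lemma fconn_porbit (g : {perm T}) x y : fconnect g x y = (y \in porbit g x).
Proof.
apply/idP/porbitP => [| [i ->]]; last by rewrite permX fconnect_iter.
by rewrite fconnect_orbit => /trajectP [i _ ->]; exists i; rewrite permX.
Qed.

Lemma porbit_g (g : {perm T}) x y : (g y \in porbit g x) = (y \in porbit g x).
Proof.
have -> : g y = (g ^+ 1)%g y by rewrite expg1.
by rewrite porbit_sym porbit_perm porbit_sym.
Qed.

Lemma dcycle_rep (D : {set T * T}) (g : {perm T}) a0 : dcycle e D ->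
  (forall a, a \in D -> g a.1 = a.2) -> a0 \in D -> D = Cyc g a0.1.
Proof.
move=> [s [/and3P [s3 us cs] ->]] Hg.
rewrite arcs_ofE => /andP [a0s _].
have nx : {in s, forall y, next s y = g y}.
  by move=> y ys; have := Hg (y, next s y); rewrite arcs_ofE ys eqxx => /(_ isT).
have fc : fcycle g s.
  apply: (sub_in_cycle _ (allss s) (cycle_next us)) => y z ys zs /=.
  by rewrite nx.
apply/setP => a; rewrite arcs_ofE inCyc -fconn_porbit (fconnect_cycle fc a0s).
by case ys: (a.1 \in s) => //=; rewrite nx.
Qed.

Lemma no2cyc (D : {set T * T}) (x y : T) : dcycle e D -> (x, y) \in D -> (y, x) \in D -> False.
Proof.
move=> [s [/and3P [s3 us _] ->]]; rewrite !arcs_ofE /=.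
move=> /andP [xs /eqP ->] /andP [_ /eqP].
have [i p def] := rot_to xs.
rewrite -!(next_rot i us) def.
have : 2 < size (x :: p) by rewrite -def size_rot.
have : uniq (x :: p) by rewrite -def rot_uniq.
case: p {def} => [|y' [|z r]] //= /and3P [].
rewrite !inE !negb_or => /and3P [xy' xz _] /andP [y'z _] _ _.
rewrite eqxx eq_sym (negbTE xy') eqxx => zx.
by move: xz; rewrite zx eqxx.
Qed.

Lemma dcyc_e (D : {set T * T}) a : dcycle e D -> a \in D -> e a.1 a.2.
Proof.
move=> [s [/and3P [_ _ cs] ->]]; rewrite arcs_ofE => /andP [h /eqP ->].
exact: next_cycle cs h.
Qed.

Lemma dcyc_out (D : {set T * T}) (x y y' : T) : dcycle e D -> (x, y) \in D -> (x, y') \in D -> y = y'.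
Proof.
by move=> [s [_ ->]]; rewrite !arcs_ofE /= => /andP [_ /eqP ->] /andP [_ /eqP ->].
Qed.

Lemma dcyc_next (D : {set T * T}) (x y : T) : dcycle e D -> (x, y) \in D -> exists z, (y, z) \in D.
Proof.
move=> [s [_ ->]]; rewrite arcs_ofE /= => /andP [xs /eqP ->].
by exists (next s (next s x)); rewrite arcs_ofE /= mem_next xs eqxx.
Qed.

Lemma dcyc_ex (D : {set T * T}) : dcycle e D -> exists a, a \in D.
Proof.
move=> [[|x s] [/and3P [s3 _ _] ->]] //.
by exists (x, next (x :: s) x); rewrite arcs_ofE /= mem_head eqxx.
Qed.

Lemma Cyc_dcycle (g : {perm T}) x : (forall y, y \in porbit g x -> e y (g y)) ->
  g x != x -> g (g x) != x -> dcycle e (Cyc g x).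
Proof.
move=> He gx ggx.
set s := fingraph.orbit g x.
have fs : fcycle g s by apply: cycle_orbit; apply: perm_inj.
have ms y : (y \in s) = (y \in porbit g x) by rewrite -fconnect_orbit fconn_porbit.
exists s; split; last first.
  apply/setP => a; rewrite arcs_ofE inCyc ms.
  case h: (a.1 \in porbit g x) => //=.
  have := next_cycle fs (_ : a.1 \in s); rewrite ms h => /(_ isT) /eqP ->.
  by [].
apply/and3P; split.
- rewrite size_orbit.
  have := iter_order (@perm_inj _ g) x; have := fingraph.order_gt0 g x.
  case: (fingraph.order g x) => [|[|[|n]]] //= _ => [/eqP|/eqP]; [by rewrite (negbTE gx) | by rewrite (negbTE ggx)].
- exact: orbit_uniq.
- apply: (sub_in_cycle _ (allss s) fs) => y z ys zs /= /eqP <-.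
  by apply: He; rewrite -ms.
Qed.

Lemma Cyc_shunt (g : {perm T}) x a : a \in Cyc g x -> g a.1 = a.2.
Proof. by rewrite inCyc => /andP [_ /eqP ->]. Qed.

Lemma Cyc_same (g : {perm T}) x y : y \in porbit g x -> Cyc g y = Cyc g x.
Proof. by rewrite -eq_porbit_mem => /eqP E; rewrite /Cyc E. Qed.

Lemma rev_arcsE (D : {set T * T}) a : (a \in rev_arcs D) = ((a.2, a.1) \in D).
Proof.
apply/imsetP/idP => [[b bD ->] | h] /=; first by case: b bD.
by exists (a.2, a.1) => //; case: a {h}.
Qed.

Lemma Cyc_inv (g : {perm T}) x : rev_arcs (Cyc g x) = Cyc g^-1 x.
Proof.
apply/setP => -[a b]; rewrite rev_arcsE !inCyc /= porbitV.
apply/andP/andP => [[h /eqP ->] | [h /eqP ->]]; rewrite ?permK ?permKV ?porbit_g //.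
by split => //; rewrite -porbit_g permKV.
Qed.

Lemma porbitJ (g h : {perm T}) x y :
  (y \in porbit (g ^ h)%g (h x)) = (h^-1%g y \in porbit g x).
Proof.
apply/porbitP/porbitP => [[i ->] | [i hi]]; exists i.
  by rewrite -conjXg permJ permK.
by rewrite -conjXg permJ -hi permKV.
Qed.

Lemma act_arcsE (h : {perm T}) (D : {set T * T}) a :
  (a \in act_arcs h D) = ((h^-1%g a.1, h^-1%g a.2) \in D).
Proof.
apply/imsetP/idP => [[b bD ->] | H] /=; first by rewrite !permK; case: b bD.
by exists (h^-1%g a.1, h^-1%g a.2) => //=; rewrite !permKV; case: a {H}.
Qed.

Lemma Cyc_act (g h : {perm T}) x : act_arcs h (Cyc g x) = Cyc (g ^ h)%g (h x).
Proof.
apply/setP => -[a b]; rewrite act_arcsE !inCyc /= porbitJ.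
have -> : (g ^ h)%g a = h (g (h^-1%g a)) by rewrite -permJ permKV.
congr (_ && _); apply/eqP/eqP => [<- | ->]; [by rewrite permKV | by rewrite permK].
Qed.

Lemma act_arcsM (h k : {perm T}) (D : {set T * T}) : act_arcs (h * k)%g D = act_arcs k (act_arcs h D).
Proof.
apply/setP => a; rewrite !act_arcsE /= invMg !permM.
by [].
Qed.

Lemma act_arcs1 (D : {set T * T}) : act_arcs 1%g D = D.
Proof. by apply/setP => a; rewrite act_arcsE invg1 !perm1; case: a. Qed.

Lemma act_rev (h : {perm T}) (D : {set T * T}) : act_arcs h (rev_arcs D) = rev_arcs (act_arcs h D).
Proof. by apply/setP => a; rewrite act_arcsE !rev_arcsE act_arcsE. Qed.

Lemma undirect_rev (D : {set T * T}) : undirect (rev_arcs D) = undirect D.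
Proof.
rewrite /undirect /rev_arcs -imset_comp; apply: eq_imset => b /=; exact: setUC.
Qed.

Lemma undirect_act (h : {perm T}) (D : {set T * T}) :
  act_edges h (undirect D) = undirect (act_arcs h D).
Proof.
rewrite /act_edges /undirect /act_arcs -!imset_comp.
apply: eq_imset => a /=; by rewrite imsetU1 imset_set1.
Qed.

Lemma set2_inv (x y x' y' : T) : x != y -> [set x; y] = [set x'; y'] ->
  (x = x' /\ y = y') \/ (x = y' /\ y = x').
Proof.
move=> xy E.
have := set21 x y; have := set22 x y; rewrite E !inE.
case/orP => /eqP hy; case/orP => /eqP hx; subst; rewrite ?eqxx // in xy; by [left|right].
Qed.

End Gen.


Section Gen2.
Variables (T : finType) (e : rel T).
Hypothesis e_irr : irreflexive e.

Lemma orient_agree (g : {perm T}) x (D : {set T * T}) y0 :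
  dcycle e D -> undirect D = undirect (Cyc g x) ->
  y0 \in porbit g x -> (y0, g y0) \in D -> D = Cyc g x.
Proof.
move=> dD UD y0x y0D.
have step n : (iter n g y0, g (iter n g y0)) \in D.
  elim: n => [//|n IH] /=.
  move: IH; set a := iter n g y0 => IH.
  have [c bc] := dcyc_next dD IH.
  have : [set g a; c] \in undirect (Cyc g x).
    by rewrite -UD; apply/imsetP; exists (g a, c).
  case/imsetP => a' a'C E.
  have nbc : g a != c.
    by have := dcyc_e dD bc; apply: contraTneq => /= ->; rewrite e_irr.
  have ga' := Cyc_shunt a'C.
  case: (set2_inv nbc E) => [[h1 h2] | [h1 h2]].
    by move: bc; rewrite h2 -ga' -h1.
  exfalso; have ac : a = c by apply: (@perm_inj _ g); rewrite h1 h2 ga'.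
  by move: bc; rewrite -ac => bc; apply: (no2cyc dD IH bc).
have sub1 : Cyc g x \subset D.
  apply/subsetP => -[a b]; rewrite inCyc /= => /andP [ax /eqP ->].
  have : a \in porbit g y0.
    have E0 : porbit g y0 = porbit g x by apply/eqP; rewrite eq_porbit_mem.
    by rewrite E0.
  by case/porbitP => i ->; rewrite permX.
apply/eqP; rewrite eqEsubset sub1 andbT.
apply/subsetP => a aD.
have : [set a.1; a.2] \in undirect (Cyc g x) by rewrite -UD; apply/imsetP; exists a.
case/imsetP => b bC E.
have a1x : a.1 \in porbit g x.
  have := set21 a.1 a.2; rewrite E !inE => /orP [] /eqP ->.
    by move: bC; rewrite inCyc => /andP [].
  by rewrite -(Cyc_shunt bC) porbit_g; move: bC; rewrite inCyc => /andP [].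
have h : (a.1, g a.1) \in D by apply: (subsetP sub1); rewrite inCyc a1x eqxx.
have e2 : g a.1 = a.2 by apply: (dcyc_out dD h); rewrite -surjective_pairing.
by rewrite inCyc a1x e2 eqxx.
Qed.

Lemma orient (g : {perm T}) x (D : {set T * T}) :
  dcycle e D -> undirect D = undirect (Cyc g x) ->
  D = Cyc g x \/ D = Cyc g^-1 x.
Proof.
move=> dD UD; have [a aD] := dcyc_ex dD.
have : [set a.1; a.2] \in undirect (Cyc g x) by rewrite -UD; apply/imsetP; exists a.
case/imsetP => b bC E.
have nab : a.1 != a.2 by have := dcyc_e dD aD; apply: contraTneq => ->; rewrite e_irr.
have b1x : b.1 \in porbit g x by move: bC; rewrite inCyc => /andP [].
have gb := Cyc_shunt bC.
case: (set2_inv nab E) => [[h1 h2] | [h1 h2]].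
  left; apply: (orient_agree dD UD b1x).
  by rewrite gb -h1 -h2 -surjective_pairing.
right; apply: (orient_agree (y0 := a.1) dD).
- by rewrite -Cyc_inv undirect_rev.
- by rewrite porbitV h1 -gb porbit_g.
- have -> : (g^-1)%g a.1 = a.2 by rewrite h1 -gb permK h2.
  by rewrite -surjective_pairing.
Qed.

End Gen2.


Lemma conj_pow (gT : finGroupType) (x : gT) i : (x ^ (x ^+ i))%g = x.
Proof. by rewrite conjgE (commuteX i (commute_refl x)) mulKg. Qed.

Lemma exp2_abelem (gT : finGroupType) (H : {group gT}) :
  (forall x, x \in H -> (x * x = 1)%g) -> (2.-abelem H)%g.
Proof.
move=> HH; apply/abelemP => //; split; last by move=> x /HH; rewrite expgS expg1.
have inv x : x \in H -> (x^-1 = x)%g.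
  by move=> /HH xx; rewrite -{2}(mulKg x x) xx mulg1.
apply/centsP => x xH y yH.
by rewrite /commute -(inv (x * y)%g (groupM xH yH)) invMg (inv y yH) (inv x xH).
Qed.

Lemma I2_cases (x : 'I_2) : x = ord0 \/ x = ord_max.
Proof. case: x => [[|[|//]] ?]; [left|right]; exact: val_inj. Qed.

Lemma Z22 : (2.-abelem [set: ('I_2 * 'I_2)%type])%g.
Proof. apply/abelemP => //; split.
  apply/centsP => -[a b] _ [c d] _. apply/commgP.
  by case: (I2_cases a) => ->; case: (I2_cases b) => ->; case: (I2_cases c) => ->; case: (I2_cases d) => ->; vm_compute.
move=> [a b] _; apply/eqP.
by case: (I2_cases a) => ->; case: (I2_cases b) => ->; vm_compute.
Qed.

Lemma kleinE (gT : finGroupType) (S : {group gT}) :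
  (S \isog [set: ('I_2 * 'I_2)%type])%g = (2.-abelem S)%g && (#|S| == 4).
Proof. by rewrite isog_sym (isog_abelem_card _ Z22) cardsT card_prod card_ord. Qed.

Set Default Proof Using "All".
Section Main.
Variables (T : finType) (e : rel T) (G : {group {perm T}}).
Hypotheses (e_sym : symmetric e) (e_irr : irreflexive e)
  (G_aut : forall g, g \in G -> forall x y, e (g x) (g y) = e x y)
  (G_arc_regular : forall x y x' y', e x y -> e x' y' ->
      exists! g, g \in G /\ g x = x' /\ g y = y').

Lemma uniq_arc (g g' : {perm T}) x y : g \in G -> g' \in G -> e x y ->
  g x = g' x -> g y = g' y -> g = g'.
Proof.
move=> gG g'G exy h1 h2.
have e' : e (g x) (g y) by rewrite G_aut.
have [k [_ U]] := G_arc_regular exy e'.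
have h3 := U g (conj gG (conj erefl erefl)).
have h4 := U g' (conj g'G (conj (esym h1) (esym h2))).
by rewrite -h3 -h4.
Qed.

Lemma arc_ex x y x' y' : e x y -> e x' y' ->
  exists2 g, g \in G & g x = x' /\ g y = y'.
Proof. by move=> h1 h2; have [k [[kG [k1 k2]] _]] := G_arc_regular h1 h2; exists k. Qed.

Lemma fix1 (h : {perm T}) x y : h \in G -> e x y -> h x = x -> h y = y -> h = 1%g.
Proof. by move=> hG exy h1 h2; apply: (uniq_arc hG (group1 G) exy); rewrite perm1. Qed.

Lemma e_orbit (g : {perm T}) x : g \in G -> e x (g x) ->
  forall y, y \in porbit g x -> e y (g y).
Proof.
move=> gG exg y /porbitP [i ->].
have -> : g ((g ^+ i)%g x) = (g ^+ i)%g (g x) by rewrite -!permM -expgS -expgSr.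
by rewrite G_aut ?groupX.
Qed.

Lemma Cyc_dcycleG (g : {perm T}) x : g \in G -> e x (g x) -> g (g x) != x ->
  dcycle e (Cyc g x).
Proof.
move=> gG exg ggx; apply: Cyc_dcycle => //; first exact: e_orbit.
by apply: (contraTneq _ exg) => ->; rewrite e_irr.
Qed.

Lemma Cyc_dcons (g : {perm T}) x : g \in G -> e x (g x) -> g (g x) != x ->
  dconsistent e G (Cyc g x).
Proof.
move=> gG exg ggx; split; first exact: Cyc_dcycleG.
by exists g => // a; apply: Cyc_shunt.
Qed.

Lemma Cyc_inv_ok (g : {perm T}) x : g \in G -> e x (g x) -> g (g x) != x ->
  e x (g^-1%g x) /\ g^-1%g (g^-1%g x) != x.
Proof.
move=> gG exg ggx; split; first by rewrite -(G_aut gG) permKV e_sym.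
by apply: contra ggx => /eqP h; apply/eqP; rewrite -{1}h !permKV.
Qed.

Lemma Cyc_ucons (g : {perm T}) x : g \in G -> e x (g x) -> g (g x) != x ->
  uconsistent e G (undirect (Cyc g x)).
Proof.
move=> gG exg ggx; split.
  by exists (Cyc g x); split => //; apply: Cyc_dcycleG.
move=> D dD UD; case: (orient e_irr dD UD) => ->; first exact: Cyc_dcons.
have [h1 h2] := Cyc_inv_ok gG exg ggx.
by apply: Cyc_dcons => //; rewrite groupV.
Qed.

Lemma conj_cyc (g g' h : {perm T}) u u' : g \in G -> g' \in G -> h \in G ->
  e u' (g' u') -> act_arcs h (Cyc g u) = Cyc g' u' ->
  exists2 h', h' \in G & h' u = u' /\ (g ^ h')%g = g'.
Proof.
move=> gG g'G hG eu E; rewrite Cyc_act in E.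
have m1 : (u', g' u') \in Cyc g' u' by rewrite inCyc porbit_id eqxx.
have m2 : (g' u', g' (g' u')) \in Cyc g' u' by rewrite inCyc porbit_g porbit_id eqxx.
rewrite -E !inCyc /= in m1 m2.
case/andP: m1 => u'o /eqP s1; case/andP: m2 => _ /eqP s2.
have gh : (g ^ h)%g = g'.
  apply: (uniq_arc _ g'G eu); [by rewrite groupJ | by rewrite s1 | by rewrite s2].
rewrite gh in u'o; case/porbitP: u'o => i hi.
exists (h * g' ^+ i)%g; first by rewrite groupM ?groupX.
split; first by rewrite permM -hi.
by rewrite conjgM gh conj_pow.
Qed.

Lemma inS v (k : {perm T}) : (k \in 'C_G[v | 'P])%g = (k \in G) && (k v == v).
Proof. by rewrite !inE sub1set inE. Qed.


Lemma cardS v (tetra : #|[set w | e v w]| = 4) : #|('C_G[v | 'P])%g| = 4.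
Proof.
have [u vu] : exists u, e v u.
  have : 0 < #|[set w | e v w]| by rewrite tetra.
  by case/card_gt0P => u; rewrite inE; exists u.
rewrite -tetra -(@card_in_imset _ _ (fun k : {perm T} => k u)).
  apply: eq_card => w; rewrite [in RHS]inE; apply/imsetP/idP => [[k kS ->] | vw].
    by move: kS; rewrite inS => /andP [kG /eqP kv]; rewrite -{1}kv G_aut.
  have [k kG [k1 k2]] := arc_ex vu vw.
  by exists k; rewrite // inS kG k1 eqxx.
move=> k k'; rewrite !inS => /andP [kG /eqP kv] /andP [k'G /eqP k'v] kk'.
by apply: (uniq_arc kG k'G vu); rewrite ?kv ?k'v.
Qed.

Lemma fwd v u (k : {perm T}) : e v u ->
  (forall U, uconsistent e G U -> usymmetric e G U) ->
  k \in ('C_G[v | 'P])%g -> (k * k = 1)%g.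
Proof.
move=> vu Hs; rewrite inS => /andP [kG /eqP kv].
have uv : e u v by rewrite e_sym.
have [ku | nku] := eqVneq (k u) u.
  by rewrite (fix1 kG vu kv ku) mulg1.
have kiv : k^-1%g v = v by rewrite -{1}kv permK.
have vw : e v (k^-1%g u) by rewrite -{1}kiv G_aut ?groupV.
have wu : k^-1%g u != u.
  by apply: contra nku => /eqP h; apply/eqP; rewrite -{1}h permKV.
have [g gG [gu gv]] := arc_ex uv vw.
have ggu : g (g u) != u by rewrite gu gv.
have egu : e u (g u) by rewrite gu.
have [r rG E] := Hs _ (Cyc_ucons gG egu ggu) (Cyc g u) (Cyc_dcycleG gG egu ggu) erefl.
have giv : g^-1%g v = u by rewrite -gu permK.
have hv : v \in porbit g^-1 u.
  by rewrite porbit_sym -{1}giv porbit_g porbit_id.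
rewrite Cyc_inv -(Cyc_same hv) in E.
have ev : e v (g^-1%g v) by rewrite giv.
have [h' h'G [h'u gh']] := conj_cyc gG (groupVr gG) rG ev E.
have J x : g^-1%g (h' x) = h' (g x) by rewrite -gh' permJ.
have h'v : h' v = u by rewrite -gu -J h'u giv.
have h'h' : (h' * h' = 1)%g.
  by apply: (fix1 (groupM h'G h'G) uv); rewrite permM ?h'u ?h'v.
have Jv := J v; rewrite h'v gv in Jv.
have k'G : (g^-1 * h')%g \in G by rewrite groupM ?groupV.
have giw : g^-1%g (k^-1%g u) = v by rewrite -gv permK.
have kk' : k = (g^-1 * h')%g.
  apply: (uniq_arc kG k'G vw); rewrite permM ?giv ?h'u ?kv //.
  by rewrite permKV giw h'v.
have k'u : (g^-1 * h')%g u = k^-1%g u.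
  by rewrite permM Jv -permM h'h' perm1.
have k'v : (g^-1 * h')%g v = v by rewrite permM giv h'u.
rewrite kk'; apply: (fix1 (groupM k'G k'G) vu); rewrite permM.
  by rewrite !k'v.
by rewrite k'u -kk' permKV.
Qed.


Section Bwd.
Variables v0 u : T.
Hypothesis uv0 : e u v0.
Hypothesis inv : forall k, k \in ('C_G[v0 | 'P])%g -> (k * k = 1)%g.

Lemma sym_base (g : {perm T}) : g \in G -> g u = v0 -> g v0 != u ->
  exists2 r, r \in G & act_arcs r (Cyc g u) = rev_arcs (Cyc g u).
Proof.
move=> gG gu gw.
have v0u : e v0 u by rewrite e_sym.
have [r rG [ru rv]] := arc_ex uv0 v0u.
have rr : (r * r = 1)%g by apply: (fix1 (groupM rG rG) uv0); rewrite permM ?ru ?rv.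
have rK x : r (r x) = x by rewrite -permM rr perm1.
have giv : g^-1%g v0 = u by rewrite -gu permK.
have kG : (g^-1 * r)%g \in G by rewrite groupM ?groupV.
have kv : (g^-1 * r)%g v0 = v0 by rewrite permM giv ru.
have kk := inv (_ : (g^-1 * r)%g \in ('C_G[v0 | 'P])%g).
rewrite inS kG kv eqxx in kk; have {}kk := kk isT.
have kw : (g^-1 * r)%g (g v0) = u by rewrite permM permK rv.
have ku : (g^-1 * r)%g u = g v0 by rewrite -{1}kw -permM kk perm1.
have h1 : r (g^-1%g u) = g v0 by rewrite -permM.
have grv : g^-1%g u = r (g v0) by rewrite -h1 rK.
have gr : (g ^ r)%g = g^-1%g.
  apply: (uniq_arc (groupJ gG rG) (groupVr gG) v0u).
    by rewrite -{1}ru permJ gu rv giv.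
  by rewrite -{1}rv permJ grv.
exists r => //; rewrite Cyc_act gr ru Cyc_inv; apply: Cyc_same.
by rewrite porbit_sym -{1}giv porbit_g porbit_id.
Qed.

Lemma normalize (D : {set T * T}) (g : {perm T}) : dcycle e D -> g \in G ->
  (forall a, a \in D -> g a.1 = a.2) ->
  exists2 h, h \in G & exists2 g', g' \in G &
    [/\ g' u = v0, e v0 (g' v0), g' v0 != u & act_arcs h D = Cyc g' u].
Proof.
move=> dD gG sh; have [a aD] := dcyc_ex dD.
have DE := dcycle_rep dD sh aD.
have ea := dcyc_e dD aD; have ga := sh a aD.
have [h hG [h1 h2]] := arc_ex ea uv0.
have a2D : (a.2, g a.2) \in D by rewrite DE inCyc /= -ga porbit_g porbit_id eqxx.
exists h => //; exists (g ^ h)%g; first by rewrite groupJ.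
have J x : (g ^ h)%g (h x) = h (g x) := permJ g h x.
split.
- by rewrite -h1 J ga h2.
- by rewrite -h2 J G_aut //; exact: (dcyc_e dD a2D).
- rewrite -h2 J -h1 (inj_eq perm_inj); apply/eqP => E.
  have aD' : (a.1, a.2) \in D by rewrite -surjective_pairing.
  by apply: (no2cyc dD aD'); rewrite -E.
- by rewrite DE Cyc_act h1.
Qed.

Lemma same_base (g g' h : {perm T}) : g \in G -> g' \in G -> h \in G ->
  g u = v0 -> g' u = v0 -> act_arcs h (Cyc g u) = Cyc g' u -> g = g'.
Proof.
move=> gG g'G hG gu g'u E.
have eu : e u (g' u) by rewrite g'u.
have [h'' h''G [h''u gh'']] := conj_cyc gG g'G hG eu E.
have h''v : h'' v0 = v0.
  by have := permJ g h'' u; rewrite gh'' h''u g'u gu.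
by rewrite -gh'' (fix1 h''G uv0 h''u h''v) conjg1.
Qed.

Lemma distinct (g g' : {perm T}) : g \in G -> g' \in G ->
  g u = v0 -> g' u = v0 -> g v0 != u -> g' v0 != u -> g v0 != g' v0 ->
  ~ same_orbit G (undirect (Cyc g u)) (undirect (Cyc g' u)).
Proof.
move=> gG g'G gu g'u ng ng' ne [h hG E].
rewrite undirect_act in E.
have dD' : dcycle e (act_arcs h (Cyc g u)).
  rewrite Cyc_act; apply: Cyc_dcycleG; first by rewrite groupJ.
    by rewrite permJ G_aut // gu.
  by rewrite !permJ (inj_eq perm_inj) gu.
suff gg : g = g' by rewrite gg eqxx in ne.
case: (orient e_irr dD' E) => E'; first exact: same_base hG gu g'u E'.
have [r rG Er] := sym_base g'G g'u ng'.
apply: (@same_base _ _ (h * r^-1)%g) => //; first by rewrite groupM ?groupV.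
by rewrite act_arcsM E' -Cyc_inv -Er -act_arcsM mulgV act_arcs1.
Qed.

End Bwd.

End Main.


Theorem lemma1p3 (T : finType) (e : rel T) (G : {group {perm T}})
  (v0 : T)
  (e_sym : symmetric e) (e_irr : irreflexive e)
  (tetravalent : forall v : T, #|[set w | e v w]| = 4)
  (G_aut : forall g, g \in G -> forall x y, e (g x) (g y) = e x y)
  (G_arc_regular : forall x y x' y', e x y -> e x' y' ->
      exists! g, g \in G /\ g x = x' /\ g y = y') :
  ((exists U1 U2 U3 : {set {set T}},
      [/\ uconsistent e G U1, uconsistent e G U2 & uconsistent e G U3] /\
      [/\ ~ same_orbit G U1 U2, ~ same_orbit G U1 U3 & ~ same_orbit G U2 U3] /\
      forall U, uconsistent e G U ->
        [\/ same_orbit G U U1, same_orbit G U U2 | same_orbit G U U3])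
   /\ (forall U, uconsistent e G U -> usymmetric e G U))
  <->
  (forall v : T, 'C_G[v | 'P] \isog [set: ('I_2 * 'I_2)%type]).
Proof.
have HH := (e_sym, e_irr, G_aut, G_arc_regular).
have nb v : exists u, e v u.
  have : 0 < #|[set w | e v w]| by rewrite tetravalent.
  by case/card_gt0P => u; rewrite inE; exists u.
split.
  move=> [_ Hs] v; have [u vu] := nb v.
  rewrite kleinE (cardS e_sym e_irr G_aut G_arc_regular) // eqxx andbT.
  apply: exp2_abelem => k kS.
  exact: (fwd e_sym e_irr G_aut G_arc_regular vu Hs kS).
move=> Kl.
have inv v k : k \in ('C_G[v | 'P])%g -> (k * k = 1)%g.
  move: (Kl v); rewrite kleinE => /andP [/abelemP [//| _ H] _] /H.
  by rewrite expgS expg1.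
have [u v0u] := nb v0.
have uv0 : e u v0 by rewrite e_sym.
pose N := [set w | e v0 w] :\ u.
have mN w : (w \in N) = (w != u) && e v0 w by rewrite !inE.
have cN : size (enum N) = 3.
  rewrite -cardE; have := cardsD1 u [set w | e v0 w].
  by rewrite tetravalent inE v0u add1n; case=> h; exact: esym h.
have uN := enum_uniq (mem N).
have memE w : (w \in N) = (w \in enum N) by rewrite mem_enum.
have mk w : w \in N -> exists2 g, g \in G & g u = v0 /\ g v0 = w.
  by rewrite mN => /andP [_ vw]; apply: (arc_ex e_sym e_irr G_aut G_arc_regular uv0 vw).
move: cN uN memE; case: (enum N) => [|w1 [|w2 [|w3 [|]]]] //= _.
rewrite !inE !negb_or => /and3P [/andP [n12 n13] n23 _] memE.
have w1N : w1 \in N by rewrite memE !inE eqxx.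
have w2N : w2 \in N by rewrite memE !inE eqxx orbT.
have w3N : w3 \in N by rewrite memE !inE eqxx !orbT.
have [g1 g1G [g1u g1v]] := mk _ w1N.
have [g2 g2G [g2u g2v]] := mk _ w2N.
have [g3 g3G [g3u g3v]] := mk _ w3N.
have ucons g w : g \in G -> g u = v0 -> g v0 = w -> w \in N ->
    uconsistent e G (undirect (Cyc g u)).
  move=> gG gu gv; rewrite mN => /andP [wu vw].
  apply: (Cyc_ucons e_sym e_irr G_aut G_arc_regular gG); by rewrite ?gu ?gv.
have dist g g' w w' : g \in G -> g' \in G -> g u = v0 -> g' u = v0 ->
    g v0 = w -> g' v0 = w' -> w \in N -> w' \in N -> w != w' ->
    ~ same_orbit G (undirect (Cyc g u)) (undirect (Cyc g' u)).
  move=> gG g'G gu g'u gv g'v; rewrite !mN => /andP [wu _] /andP [w'u _] ww'.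
  by apply: (distinct e_sym e_irr G_aut G_arc_regular uv0 (inv v0)); rewrite ?gv ?g'v.
have cons_norm U : uconsistent e G U -> forall D, dcycle e D -> undirect D = U ->
    exists2 h, h \in G & exists2 g', g' \in G &
    [/\ g' u = v0, e v0 (g' v0), g' v0 != u & act_arcs h D = Cyc g' u].
  move=> [_ Hc] D dD UD; have [_ [g gG sh]] := Hc D dD UD.
  exact: (normalize e_sym e_irr G_aut G_arc_regular uv0 (inv v0) dD gG sh).
split.
  exists (undirect (Cyc g1 u)), (undirect (Cyc g2 u)), (undirect (Cyc g3 u)).
  split; first by split; [exact: ucons g1G g1u g1v w1N | exact: ucons g2G g2u g2v w2N
                         | exact: ucons g3G g3u g3v w3N].
  split.
    split; [exact: dist g1G g2G g1u g2u g1v g2v w1N w2N n12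
           | exact: dist g1G g3G g1u g3u g1v g3v w1N w3N n13
           | exact: dist g2G g3G g2u g3u g2v g3v w2N w3N n23].
  move=> U HU; have [[D [dD UD]] _] := HU.
  have [h hG [g' g'G [g'u eg' ng' E]]] := cons_norm U HU D dD (esym UD).
  have : g' v0 \in N by rewrite mN ng' eg'.
  rewrite memE !inE => /or3P [] /eqP g'v.
  - constructor 1; exists h => //; rewrite UD undirect_act E.
    by congr (undirect (Cyc _ u)); apply: (uniq_arc e_sym e_irr G_aut G_arc_regular g'G g1G uv0); rewrite ?g'u ?g1u ?g'v ?g1v.
  - constructor 2; exists h => //; rewrite UD undirect_act E.
    by congr (undirect (Cyc _ u)); apply: (uniq_arc e_sym e_irr G_aut G_arc_regular g'G g2G uv0); rewrite ?g'u ?g2u ?g'v ?g2v.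
  - constructor 3; exists h => //; rewrite UD undirect_act E.
    by congr (undirect (Cyc _ u)); apply: (uniq_arc e_sym e_irr G_aut G_arc_regular g'G g3G uv0); rewrite ?g'u ?g3u ?g'v ?g3v.
move=> U HU D dD UD.
have [h hG [g' g'G [g'u eg' ng' E]]] := cons_norm U HU D dD UD.
have [r rG Er] := sym_base e_sym e_irr G_aut G_arc_regular uv0 (inv v0) g'G g'u ng'.
exists (h * r * h^-1)%g; first by rewrite !groupM ?groupV.
by rewrite !act_arcsM E Er -E act_rev -act_arcsM mulgV act_arcs1.
Qed.
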